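(* Let $A$ be an $F_n$-good $n\times n$ matrix. If $A_{1,1}=1$, then $A_i=\vec{e}_i$ for all $2\leq i\leq n-1$. If $A_{1,n}=1$, then $A_i=\vec{e}_{n-i+1}$ for all $2\leq i\leq n-1$.
   Context: $F_n$ is the set of vectors $\vec{x}=(x_1,\ldots,x_n)\in\mathbb{Z}_2^n$ with no $i$ such that $x_i=x_{i+1}=1$. An $n\times n$ matrix $A$ over $\mathbb{Z}_2$ is $F_n$-good if it is invertible and $A\vec{x}\in F_n$ for all $\vec{x}\in F_n$. $A_i$ denotes the $i$-th row of $A$, $A_{i,j}$ its $(i,j)$ entry, and $\vec{e}_j$ the $j$-th standard basis vector (written as a row). *)

(* Defs.v *)
From mathcomp Require Import all_boot all_order all_algebra.
Set Implicit Arguments. Unset Strict Implicit. Unset Printing Implicit Defensive.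
Import GRing.Theory.
Local Open Scope ring_scope.

(* Z_2 is 'F_2. Vectors in Z_2^n are column vectors 'cV['F_2]_n.
   Paper index i (1..n) corresponds to ordinal i-1. *)

Definition in_Fn (n : nat) (x : 'cV['F_2]_n) : Prop :=
  forall i j : 'I_n, val j = (val i).+1 -> ~ (x i 0 = 1 /\ x j 0 = 1).

Definition Fn_good (n : nat) (A : 'M['F_2]_n) : Prop :=
  A \in unitmx /\ forall x : 'cV['F_2]_n, in_Fn x -> in_Fn (A *m x).

Definition std_row (n : nat) (j : 'I_n) : 'rV['F_2]_n := delta_mx 0 j.

(* Main.v *)
Require Import Defs.
From mathcomp Require Import all_boot all_order all_algebra.
From mathcomp Require Import zify.
Import GRing.Theory.
Local Open Scope ring_scope.

Lemma F2c (a : 'F_2) : a = 0 \/ a = 1.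
Proof. case: a => [[|[|//]]] Hi; [left|right]; exact: val_inj. Qed.
Lemma F2_11 : (1 + 1 : 'F_2) = 0. Proof. exact: val_inj. Qed.
Lemma F2_10 : (1 : 'F_2) <> 0. Proof. by apply/eqP; rewrite oner_eq0. Qed.
Lemma F2_01 : (0 : 'F_2) <> 1. Proof. by apply/eqP; rewrite eq_sym oner_eq0. Qed.

Section Core.
Variable n : nat.
Variable f : nat -> nat -> 'F_2.
Hypothesis Hadj : forall i j k, (i.+1 < n)%N -> (j < n)%N -> (k < n)%N ->
  f i j = 1 -> f i.+1 k = 1 -> (j == k.+1) || (k == j.+1).
Hypothesis Hnz : forall i, (i < n)%N -> exists2 j, (j < n)%N & f i j = 1.
Hypothesis Hdup : forall i i', (i < n)%N -> (i' < n)%N -> i != i' ->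
  (forall j, (j < n)%N -> f i j = f i' j) -> False.
Hypothesis H00 : f 0 0 = 1.

Lemma rowsingle i c : (i < n)%N -> (c < n)%N ->
  (forall j, (j < n)%N -> f i j = 1 -> j = c) ->
  forall j, (j < n)%N -> f i j = (j == c)%:R.
Proof.
move=> Hi Hc H; have [j0 Hj0 Hf] := Hnz _ Hi.
have Ej0 := H j0 Hj0 Hf; subst j0.
move=> j Hj; case: eqP => [->//|ne].
have [->//|h1] := F2c (f i j).
by exfalso; exact: ne (H j Hj h1).
Qed.

Lemma core m : forall i, (1 <= i <= m)%N -> (i.+2 <= n)%N ->
  forall j, (j < n)%N -> f i j = (j == i)%:R.
Proof.
elim: m => [|m IH] i Hi Hn; first by lia.
have [Him|Him] : (i <= m)%N \/ i = m.+1 by lia.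
  by apply: IH => //; lia.
subst i.
have E1 : forall j, (j < n)%N -> f 1 j = (j == 1)%N%:R.
  apply: rowsingle; try lia.
  move=> j Hj h; have := Hadj 0 0 j ltac:(lia) ltac:(lia) Hj H00 h.
  lia.
case: m IH Hi Hn => [|p] IH Hi Hn; first exact: E1.
have Ep1 := IH p.+1 ltac:(lia) ltac:(lia).
have fp1 : f p.+1 p.+1 = 1 by rewrite Ep1 ?eqxx //; lia.
have Hk : forall k, (k < n)%N -> f p.+2 k = 1 -> k = p.+2 \/ k = p.
  move=> k Hk h; have := Hadj p.+1 p.+1 k ltac:(lia) ltac:(lia) Hk fp1 h; lia.
have [h0|h1] := F2c (f p.+2 p).
  apply: rowsingle; try lia.
  move=> k Hk' h; case: (Hk k Hk' h) => // Ek; subst k.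
  by rewrite h0 in h; exfalso; exact: F2_01 h.
exfalso.
have [h2|h2] := F2c (f p.+2 p.+2).
  have E2 : forall j, (j < n)%N -> f p.+2 j = (j == p)%:R.
    apply: rowsingle; try lia.
    move=> k Hk' h; case: (Hk k Hk' h) => // Ek; subst k.
    by rewrite h2 in h; exfalso; exact: F2_01 h.
  case: p IH Ep1 fp1 Hk h1 h2 Hi Hn E2 => [|q] IH Ep1 fp1 Hk h1 h2 Hi Hn E2.
    have E3 : forall j, (j < n)%N -> f 3 j = (j == 1)%N%:R.
      apply: rowsingle; try lia.
      move=> k Hk' h; have := Hadj 2 0 k ltac:(lia) ltac:(lia) Hk' h1 h.
      lia.
    apply: (Hdup 3 1) => //; try lia.
    by move=> j Hj; rewrite E3 // E1.
  have Eq := IH q.+1 ltac:(lia) ltac:(lia).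
  apply: (Hdup q.+3 q.+1) => //; try lia.
  by move=> j Hj; rewrite E2 // Eq.
have E4 : forall j, (j < n)%N -> f p.+3 j = (j == p.+1)%:R.
  apply: rowsingle; try lia.
  move=> k Hk' h.
  have := Hadj p.+2 p k ltac:(lia) ltac:(lia) Hk' h1 h.
  have := Hadj p.+2 p.+2 k ltac:(lia) ltac:(lia) Hk' h2 h.
  lia.
apply: (Hdup p.+3 p.+1) => //; try lia.
by move=> j Hj; rewrite E4 // Ep1.
Qed.

End Core.

Lemma natr_F2 (b : bool) : (b%:R : 'F_2) = 1 -> b.
Proof. by case: b => // /esym; move/F2_10. Qed.

Lemma natr2_F2 (b c : bool) : (b%:R + c%:R : 'F_2) = 1 -> b || c.
Proof. by case: b; case: c => //=; rewrite addr0 => /F2_01. Qed.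

Lemma unit_kill {n} {A : 'M['F_2]_n} {u : 'rV_n} : A \in unitmx -> u *m A = 0 -> u = 0.
Proof. by move=> HA H; rewrite -(mulmxK HA u) H mul0mx. Qed.

Lemma good_P1 n (A : 'M['F_2]_n) (i i' j : 'I_n) : Fn_good A ->
  val i' = (val i).+1 -> A i j = 1 -> A i' j = 1 -> False.
Proof.
move=> [_ HG] Hii' h1 h2.
have Hx : in_Fn (delta_mx j (0 : 'I_1)).
  move=> a b Hab [ha hb]; move: ha hb; rewrite !mxE => /natr_F2/andP[/eqP ea _].
  move/natr_F2/andP=> [/eqP eb _]; subst; lia.
apply: (HG _ Hx i i' Hii'); rewrite -colE !mxE; by split.
Qed.
Arguments good_P1 {n A i i' j}.

Lemma good_P2 n (A : 'M['F_2]_n) (i i' j k : 'I_n) : Fn_good A ->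
  val i' = (val i).+1 -> A i j = 1 -> A i' k = 1 ->
  (val j == (val k).+1) || (val k == (val j).+1).
Proof.
move=> G Hii' h1 h2.
case: (eqVneq j k) => [Ejk|njk].
  by move: h1; rewrite Ejk => h1; exfalso; exact: (good_P1 G Hii' h1 h2).
case: (boolP ((val j == (val k).+1) || (val k == (val j).+1))) => // nadj.
exfalso.
have hik : A i k = 0.
  by have [//|e] := F2c (A i k); exfalso; exact: (good_P1 G Hii' e h2).
have hi'j : A i' j = 0.
  by have [//|e] := F2c (A i' j); exfalso; exact: (good_P1 G Hii' h1 e).
case: G => _ HG.
have Hx : in_Fn (delta_mx j (0 : 'I_1) + delta_mx k 0).
  move=> a b Hab [ha hb]; move: ha hb; rewrite !mxE /= !andbT.
  have nv : val j != val k by [].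
  move/natr2_F2 => H1 /natr2_F2 H2.
  move: H1 H2 => /orP[/eqP Ea|/eqP Ea] /orP[/eqP Eb|/eqP Eb]; subst a b; lia.
apply: (HG _ Hx i i' Hii').
rewrite mulmxDr -!colE !mxE hik hi'j h1 h2 addr0 add0r; by split.
Qed.
Arguments good_P2 {n A i i' j k}.

Theorem corollary2 (n : nat) (A : 'M['F_2]_n) :
  Fn_good A ->
  (forall first : 'I_n, val first = 0%N ->
     (A first first = 1 ->
        forall i : 'I_n, (1 <= val i)%N -> (val i <= n - 2)%N ->
          row i A = std_row i)
  /\ (forall last : 'I_n, val last = (n - 1)%N ->
        A first last = 1 ->
        forall i j : 'I_n, (1 <= val i)%N -> (val i <= n - 2)%N ->
          val j = (n - 1 - val i)%N ->
          row i A = std_row j)).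
Proof.
move=> G; have [HA _] := G.
case: n A G HA => [|m] A G HA; first by move=> [].
pose f i j := if (i < m.+1)%N && (j < m.+1)%N then A (inord i) (inord j) else 0.
have fE : forall (i j : 'I_m.+1), f i j = A i j.
  by move=> i j; rewrite /f !ltn_ord !inord_val.
have Hadj : forall i j k, (i.+1 < m.+1)%N -> (j < m.+1)%N -> (k < m.+1)%N ->
    f i j = 1 -> f i.+1 k = 1 -> (j == k.+1) || (k == j.+1).
  move=> i j k Hi Hj Hk; rewrite /f Hj Hk (ltnW Hi) Hi /= => h1 h2.
  have := good_P2 G (i:=inord i) (i':=inord i.+1) _ h1 h2.
  rewrite /= !inordK //; last by apply: ltnW.
  by apply.
have Hnz : forall i, (i < m.+1)%N -> exists2 j, (j < m.+1)%N & f i j = 1.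
  move=> i Hi.
  case: (boolP [exists j, A (inord i) j == 1]) => [/existsP[j /eqP h]|/existsPn H].
    exists (val j); first exact: ltn_ord.
    by rewrite /f Hi ltn_ord inord_val.
  exfalso.
  have Hr : row (inord i) A = 0.
    apply/rowP => k; rewrite !mxE.
    by have := H k; case: (F2c (A (inord i) k)) => -> // /eqP.
  move: Hr; rewrite rowE => /(unit_kill HA).
  move=> /matrixP/(_ 0 (inord i)); rewrite !mxE !eqxx /=.
  exact: F2_10.
have Hdup : forall i i', (i < m.+1)%N -> (i' < m.+1)%N -> i != i' ->
    (forall j, (j < m.+1)%N -> f i j = f i' j) -> False.
  move=> i i' Hi Hi' nii H.
  have Hr : row (inord i) A - row (inord i') A = 0.
    apply/rowP => k; rewrite !mxE.
    have := H (val k) (ltn_ord k); rewrite /f Hi Hi' ltn_ord inord_val /= => ->.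
    by rewrite subrr.
  move: Hr; rewrite !rowE -mulmxBl => /(unit_kill HA).
  move=> /matrixP/(_ 0 (inord i)); rewrite !mxE !eqxx /=.
  have -> : (inord i == inord i' :> 'I_m.+1) = false.
    by apply/negbTE; apply: contra nii => /eqP/(f_equal val); rewrite /= !inordK // => ->.
  rewrite subr0; exact: F2_10.
move=> first Hf; split.
  move=> H11 i Hi1 Hi2.
  have H00 : f 0%N 0%N = 1.
    by move: (fE first first); rewrite Hf => ->.
  apply/rowP => j; rewrite !mxE /=.
  have Ec := @core m.+1 f Hadj Hnz Hdup H00 (val i) (val i) ltac:(lia) ltac:(lia) (val j) (ltn_ord j).
  rewrite -fE Ec.
  by case: eqP => [/val_inj ->|ne]; [rewrite eqxx | case: eqP => // E; subst].
move=> last Hl H1l i j Hi1 Hi2 Hj.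
pose g i j := f i (m - j)%N.
have H00 : g 0%N 0%N = 1.
  rewrite /g subn0; move: (fE first last); rewrite Hf Hl subn1 /= => ->; exact: H1l.
have Hadjg : forall i j k, (i.+1 < m.+1)%N -> (j < m.+1)%N -> (k < m.+1)%N ->
    g i j = 1 -> g i.+1 k = 1 -> (j == k.+1) || (k == j.+1).
  move=> i' j' k' Hi Hj' Hk' h1 h2.
  have := Hadj i' (m - j')%N (m - k')%N Hi ltac:(lia) ltac:(lia) h1 h2; lia.
have Hnzg : forall i, (i < m.+1)%N -> exists2 j, (j < m.+1)%N & g i j = 1.
  move=> i' Hi; have [j0 Hj0 h] := Hnz i' Hi.
  exists (m - j0)%N; first lia.
  by rewrite /g subKn.
have Hdupg : forall i i', (i < m.+1)%N -> (i' < m.+1)%N -> i != i' ->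
    (forall j, (j < m.+1)%N -> g i j = g i' j) -> False.
  move=> i1 i2 H1 H2 n12 H; apply: (Hdup i1 i2 H1 H2 n12) => k Hk.
  have := H (m - k)%N ltac:(lia); rewrite /g subKn //.
apply/rowP => k; rewrite !mxE /=.
have Ec := @core m.+1 g Hadjg Hnzg Hdupg H00 (val i) (val i) ltac:(lia) ltac:(lia) (m - k)%N ltac:(lia).
move: Ec; rewrite /g subKn; last by have := ltn_ord k; lia.
rewrite fE => ->.
have -> : (k == j) = (m - k == val i)%N.
  apply/eqP/eqP => [->|E]; first by move: Hj Hi2; have := ltn_ord i; rewrite /=; lia.
  apply: val_inj; move: Hj Hi2 E; have := ltn_ord k; have := ltn_ord i; rewrite /=; lia.
by [].
Qed.
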